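(* Let $r$ be the maximal multiplicity of an eigenvalue in the spectrum $\Lambda$. Then for every unit vector $|\psi\rangle\in\mathbb{C}^{d_A}\otimes\mathbb{C}^{d_B}$, $\mathcal{E}_\Lambda(\psi)=0$ if and only if the Schmidt rank of $|\psi\rangle$ (the rank of $\mathrm{Tr}_B|\psi\rangle\langle\psi|$) is at most $r$. In particular, $\mathcal{E}_\Lambda$ vanishes exactly on product states if and only if $\Lambda$ consists of $d$ distinct values.
   Context: Let $d=d_A\le d_B$. A spectrum is a multiset $\Lambda=\{\lambda_1,\dots,\lambda_d\}$ of unimodular complex numbers. Let $\mathcal{W}_\Lambda$ be the set of unitary matrices on $\mathbb{C}^{d_A}$ whose eigenvalues, counted with multiplicity, are exactly $\Lambda$. Define $F^\Lambda_\psi=\max_{W\in\mathcal{W}_\Lambda}|\langle\psi|(W\otimes \mathbb{1}_B)|\psi\rangle|^2$ and $\mathcal{E}_\Lambda(\psi)=1-F^\Lambda_\psi$. *)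

(* Defs.v *)
(* Complex numbers: an arbitrary numClosedFieldType C
   (e.g. algC); conjugation is Num.conj, written x^*. *)
From HB Require Import structures.
From mathcomp Require Import all_boot all_order all_algebra.
Set Implicit Arguments. Unset Strict Implicit. Unset Printing Implicit Defensive.
Import Order.TTheory GRing.Theory Num.Theory.
Local Open Scope ring_scope.

Section Defs.
Variable C : numClosedFieldType.

Definition adjmx m n (A : 'M[C]_(m, n)) : 'M[C]_(n, m) := (map_mx Num.conj A)^T.

Definition unitary_mx n (W : 'M[C]_n) : bool := W *m adjmx W == 1%:M.

(* A vector |psi> in C^dA (x) C^dB is stored by its coordinates:
   |psi> = sum_{i,j} psi i j |i>|j>, with psi : 'M[C]_(dA, dB). *)
Definition unit_state dA dB (psi : 'M[C]_(dA, dB)) : bool :=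
  \sum_i \sum_j `|psi i j| ^+ 2 == 1.

(* <psi| (W (x) 1_B) |psi>; (W (x) 1)_{(i,j),(k,l)} = W i k * delta_{jl}. *)
Definition expect_W1 dA dB (W : 'M[C]_dA) (psi : 'M[C]_(dA, dB)) : C :=
  \sum_(i < dA) \sum_(j < dB) \sum_(k < dA) (psi i j)^* * W i k * psi k j.

Definition in_WLambda dA (Lam : dA.-tuple C) (W : 'M[C]_dA) : Prop :=
  unitary_mx W /\ char_poly W = \prod_(l <- Lam) ('X - l%:P).

Definition unimodular_spectrum dA (Lam : dA.-tuple C) : bool :=
  all (fun l => `|l| == 1) Lam.

Definition is_F_Lambda dA dB (Lam : dA.-tuple C) (psi : 'M[C]_(dA, dB)) (F : C)
  : Prop :=
  (exists2 W, in_WLambda Lam W & `|expect_W1 W psi| ^+ 2 = F) /\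
  (forall W, in_WLambda Lam W -> `|expect_W1 W psi| ^+ 2 <= F).

Definition E_Lambda (F : C) : C := 1 - F.

Definition ptraceB dA dB (psi : 'M[C]_(dA, dB)) : 'M[C]_dA :=
  \matrix_(i, k) \sum_(j < dB) psi i j * (psi k j)^*.

Definition schmidt_rank dA dB (psi : 'M[C]_(dA, dB)) : nat := \rank (ptraceB psi).

Definition max_mult dA (Lam : dA.-tuple C) : nat :=
  \max_(l <- Lam) count_mem l Lam.

End Defs.

(* Main.v *)
Require Import Defs.
From HB Require Import structures.
From mathcomp Require Import all_boot all_order all_algebra.
From mathcomp Require Import sesquilinear spectral.
Import Order.TTheory GRing.Theory Num.Theory.
Local Open Scope ring_scope.
Local Open Scope sesquilinear_scope.
Set Implicit Arguments. Unset Strict Implicit.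

Lemma adjE {C : numClosedFieldType} m n (A : 'M[C]_(m, n)) : adjmx A = A ^t*.
Proof. by rewrite /adjmx map_trmx. Qed.

Lemma unitaryE {C : numClosedFieldType} n (W : 'M[C]_n) :
  unitary_mx W = (W \is unitarymx).
Proof. by rewrite /unitary_mx adjE. Qed.

Lemma unitary_l {C : numClosedFieldType} n (W : 'M[C]_n) :
  W \is unitarymx -> W ^t* *m W = 1%:M.
Proof. by move=> /unitarymxP /mulmx1C. Qed.

Lemma cap_ker0 {C : numClosedFieldType} m n (A : 'M[C]_(m, n)) :
  (A :&: kermx (A ^t*) = 0)%MS.
Proof. by have := orthomx_ortho_disj A; rewrite /orthomx mul1mx. Qed.

Lemma rank_AAt {C : numClosedFieldType} m n (A : 'M[C]_(m, n)) :
  \rank (A *m A ^t*) = \rank A.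
Proof. by have := mxrank_mul_ker A (A ^t*); rewrite cap_ker0 mxrank0 addn0. Qed.

Lemma ptraceE {C : numClosedFieldType} m n (A : 'M[C]_(m, n)) :
  ptraceB A = A *m A ^t*.
Proof. by apply/matrixP => i k; rewrite !mxE; apply: eq_bigr => j _; rewrite !mxE. Qed.

Lemma schmidtE {C : numClosedFieldType} m n (A : 'M[C]_(m, n)) :
  schmidt_rank A = \rank A.
Proof. by rewrite /schmidt_rank ptraceE rank_AAt. Qed.

Definition ip {C : numClosedFieldType} m n (X Y : 'M[C]_(m, n)) : C :=
  \sum_i \sum_j (X i j)^* * Y i j.

Lemma expectE {C : numClosedFieldType} m n (W : 'M[C]_m) (X : 'M[C]_(m, n)) :
  expect_W1 W X = ip X (W *m X).
Proof.
rewrite /expect_W1 /ip; apply: eq_bigr => i _; apply: eq_bigr => j _.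
by rewrite mxE mulr_sumr; apply: eq_bigr => k _; rewrite mulrA.
Qed.

Lemma ip_tr {C : numClosedFieldType} m n (X Y : 'M[C]_(m, n)) :
  ip X Y = \tr (X ^t* *m Y).
Proof.
rewrite /ip /mxtrace exchange_big; apply: eq_bigr => j _.
by rewrite mxE; apply: eq_bigr => i _; rewrite !mxE.
Qed.

Lemma ipW {C : numClosedFieldType} m n (W : 'M[C]_m) (X : 'M[C]_(m, n)) :
  W \is unitarymx -> ip (W *m X) (W *m X) = ip X X.
Proof.
move=> uW; rewrite !ip_tr trmx_mul map_mxM mulmxA -(mulmxA _ (W ^t*)).
by rewrite unitary_l // mulmx1.
Qed.

Lemma ipXX {C : numClosedFieldType} m n (X : 'M[C]_(m, n)) :
  ip X X = \sum_i \sum_j `|X i j| ^+ 2.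
Proof. by apply: eq_bigr => i _; apply: eq_bigr => j _; rewrite normCK mulrC. Qed.

Lemma ip_ge0 {C : numClosedFieldType} m n (X : 'M[C]_(m, n)) : 0 <= ip X X.
Proof. by rewrite ipXX; apply: sumr_ge0 => i _; apply: sumr_ge0 => j _; rewrite exprn_ge0. Qed.

Lemma ip_eq0 {C : numClosedFieldType} m n (X : 'M[C]_(m, n)) : ip X X = 0 -> X = 0.
Proof.
rewrite ipXX => /eqP; rewrite psumr_eq0 => [/allP H|i _]; last first.
  by apply: sumr_ge0 => j _; rewrite exprn_ge0.
apply/matrixP => i j; rewrite mxE; have /implyP := H i (mem_index_enum _).
move=> /(_ isT); rewrite psumr_eq0 => [/allP H2|k _]; last by rewrite exprn_ge0.
by have /implyP := H2 j (mem_index_enum _) => /(_ isT); rewrite expf_eq0 /= normr_eq0 => /eqP.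
Qed.

Lemma ipC {C : numClosedFieldType} m n (X Y : 'M[C]_(m, n)) : ip Y X = (ip X Y)^*.
Proof.
rewrite /ip rmorph_sum; apply: eq_bigr => i _; rewrite rmorph_sum; apply: eq_bigr => j _.
by rewrite rmorphM /= conjCK mulrC.
Qed.

Lemma ip_key {C : numClosedFieldType} m n (a b : 'M[C]_(m, n)) :
  ip a a = 1 -> ip (b - ip a b *: a) (b - ip a b *: a) = ip b b - `|ip a b| ^+ 2.
Proof.
move=> haa; set c := ip a b.
have E : ip (b - c *: a) (b - c *: a) =
   ip b b - c * ip b a - c^* * ip a b + c * c^* * ip a a.
  rewrite /ip !mulr_sumr -!sumrB -big_split; apply: eq_bigr => i _.
  rewrite /= !mulr_sumr -!sumrB -big_split; apply: eq_bigr => j _.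
  rewrite !mxE rmorphB rmorphM /= mulrBl !mulrBr.
  have e1 : (b i j)^* * (c * a i j) = c * ((b i j)^* * a i j) by rewrite mulrCA.
  have e2 : c^* * (a i j)^* * b i j = c^* * ((a i j)^* * b i j) by rewrite mulrA.
  have e3 : c^* * (a i j)^* * (c * a i j) = c * c^* * ((a i j)^* * a i j).
    by rewrite mulrACA [c^* * c]mulrC.
  by rewrite e1 e2 e3 opprB addrA addrAC.
by rewrite E haa mulr1 (ipC a b) -/c [c^* * c]mulrC subrK normCK.
Qed.

Lemma unit_ip {C : numClosedFieldType} m n (X : 'M[C]_(m, n)) :
  unit_state X -> ip X X = 1.
Proof. by rewrite ipXX => /eqP. Qed.

Lemma boundW {C : numClosedFieldType} m n (W : 'M[C]_m) (X : 'M[C]_(m, n)) :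
  W \is unitarymx -> ip X X = 1 -> `|ip X (W *m X)| ^+ 2 <= 1.
Proof.
move=> uW hX; have := ip_ge0 (W *m X - ip X (W *m X) *: X).
by rewrite ip_key // ipW // hX subr_ge0.
Qed.

Lemma eqW {C : numClosedFieldType} m n (W : 'M[C]_m) (X : 'M[C]_(m, n)) :
  W \is unitarymx -> ip X X = 1 -> `|ip X (W *m X)| ^+ 2 = 1 ->
  W *m X = ip X (W *m X) *: X.
Proof.
move=> uW hX h1; have := ip_key (W *m X) hX; rewrite ipW // hX h1 subrr.
by move/ip_eq0/eqP; rewrite subr_eq0 => /eqP.
Qed.


Lemma char_poly_tr {R : comNzRingType} n (A : 'M[R]_n) : char_poly A^T = char_poly A.
Proof.
rewrite /char_poly -det_tr; congr (\det _).
by rewrite /char_poly_mx raddfB /= tr_scalar_mx map_trmx trmxK.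
Qed.

Lemma sim_char {R : comNzRingType} p n (e : p = n) (U : 'M[R]_(p, n)) (V : 'M[R]_(n, p))
  (M : 'M[R]_n) : V *m U = 1%:M -> char_poly (U *m M *m V) = char_poly M.
Proof.
subst p => VU; have UV := mulmx1C VU.
have E : char_poly_mx (U *m M *m V) = map_mx polyC U *m char_poly_mx M *m map_mx polyC V.
  rewrite /char_poly_mx mulmxBr mulmxBl -!map_mxM mul_mx_scalar -scalemxAl.
  by rewrite -map_mxM UV map_mx1 scale_scalar_mx mulr1.
rewrite /char_poly E !det_mulmx mulrC mulrA -det_mulmx -map_mxM VU map_mx1 det1.
by rewrite mul1r.
Qed.

Lemma char_lblock {R : comNzRingType} k l (A : 'M[R]_k) (B : 'M[R]_(l, k)) (D : 'M[R]_l) :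
  char_poly (block_mx A 0 B D) = char_poly A * char_poly D.
Proof.
rewrite /char_poly /char_poly_mx (scalar_mx_block k l) map_block_mx map_mx0.
by rewrite opp_block_mx add_block_mx oppr0 !addr0 add0r det_lblock.
Qed.

Lemma char_scalar {R : comNzRingType} k (c : R) :
  char_poly (c%:M : 'M_k) = ('X - c%:P) ^+ k.
Proof.
rewrite char_poly_trig ?scalar_mx_is_trig //.
rewrite (eq_bigr (fun _ => 'X - c%:P)) ?prodr_const ?card_ord // => i _.
by rewrite mxE eqxx mulr1n.
Qed.

Lemma char_diag {R : comNzRingType} k (d : 'rV[R]_k) :
  char_poly (diag_mx d) = \prod_(i < k) ('X - (d 0 i)%:P).
Proof.
rewrite char_poly_trig ?diag_mx_is_trig //.
by apply: eq_bigr => i _; rewrite mxE eqxx mulr1n.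
Qed.


Lemma geo_mult {C : numClosedFieldType} n m (M : 'M[C]_n) (Phi : 'M[C]_(m, n)) c :
  Phi *m M = c *: Phi -> ('X - c%:P) ^+ (\rank Phi) %| char_poly M.
Proof.
move=> hM.
have uU := schmidt_complete_unitarymx Phi.
have eq := add_rank_ortho Phi.
set U := schmidt_complete Phi in uU.
have UtU : U ^t* *m U = 1%:M by have := mulmxKtV (1%:M) uU eq; rewrite mul1mx.
rewrite -(sim_char eq M UtU).
have := unitarymxP uU; rewrite /U /schmidt_complete.
set S1 := schmidt _; set S2 := schmidt _.
rewrite tr_col_mx map_row_mx mul_col_row scalar_mx_block.
move=> /eq_block_mx [h11 h12 h21 h22].
have sS1 : (S1 <= Phi)%MS.
  by rewrite /S1 eqmx_schmidt_free ?row_base_free // eq_row_base.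
have [D hD] := submxP sS1.
have hS1 : S1 *m M = c *: S1 by rewrite hD -mulmxA hM scalemxAr.
set N := _ *m _ *m _.
have hu : usubmx N = row_mx c%:M 0.
  by rewrite /N !mul_col_mx col_mxKu hS1 -scalemxAl mul_mx_row h11 h12 scale_row_mx scalemx1 scaler0.
have -> : N = block_mx c%:M 0 (dlsubmx N) (drsubmx N).
  by rewrite -{1}[N]submxK /ulsubmx /ursubmx hu row_mxKl row_mxKr.
by rewrite char_lblock char_scalar dvdp_mulIl.
Qed.


Lemma ipZ {C : numClosedFieldType} m n (X Y : 'M[C]_(m, n)) a :
  ip X (a *: Y) = a * ip X Y.
Proof.
rewrite /ip mulr_sumr; apply: eq_bigr => i _; rewrite mulr_sumr.
by apply: eq_bigr => j _; rewrite mxE mulrCA.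
Qed.

Lemma count_le_max {C : numClosedFieldType} dA (Lam : dA.-tuple C) c :
  (count_mem c Lam <= max_mult Lam)%N.
Proof.
have [cin|cnin] := boolP (c \in (Lam : seq C)).
  by rewrite /max_mult; apply: (leq_bigmax_seq c)...
by move: cnin; rewrite -has_pred1 has_count lt0n negbK => /eqP ->.
Qed.

Lemma max_attained {C : numClosedFieldType} (s : seq C) (f : C -> nat) :
  s != [::] -> exists2 x, x \in s & \max_(l <- s) f l = f x.
Proof.
elim: s => [//|a s IH] _; rewrite big_cons.
have [->|sn0] := eqVneq s [::].
  by exists a; rewrite ?mem_head // big_nil maxn0.
have [x xin ->] := IH sn0.
have [le|lt] := leqP (f a) (f x).
  by exists x; rewrite ?inE ?xin ?orbT // maxnE subnKC // ?addnC // (maxn_idPr le).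
by exists a; rewrite ?mem_head // (maxn_idPl (ltnW lt)).
Qed.

Lemma filter_pred1_nseq {C : numClosedFieldType} (s : seq C) c :
  filter (pred1 c) s = nseq (count_mem c s) c.
Proof.
elim: s => [//|a s IH] /=; have [->|ne] := eqVneq a c; first by rewrite /= IH.
by rewrite IH /= add0n.
Qed.

Lemma forward_rank {C : numClosedFieldType} dA dB (Lam : dA.-tuple C)
  (W : 'M[C]_dA) (psi : 'M[C]_(dA, dB)) :
  in_WLambda Lam W -> ip psi psi = 1 -> `|expect_W1 W psi| ^+ 2 = 1 ->
  (\rank psi <= max_mult Lam)%N.
Proof.
move=> [uW hW] hX; rewrite expectE unitaryE in uW * => h1.
have E := eqW uW hX h1; set c := ip psi (W *m psi) in E.
have Et : psi^T *m W^T = c *: psi^T by rewrite -trmx_mul E linearZ.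
have := geo_mult Et; rewrite char_poly_tr hW mxrank_tr.
have nz : \prod_(l <- Lam) ('X - l%:P) != 0 :> {poly C}.
  by apply: monic_neq0; apply: monic_prod_XsubC.
rewrite -mup_geq // mu_prod_XsubC => le; apply: leq_trans le _.
exact: count_le_max.
Qed.


Lemma trC_mul {C : numClosedFieldType} m n p (A : 'M[C]_(m, n)) (B : 'M[C]_(p, n)) :
  (A *m B ^t*) ^t* = B *m A ^t*.
Proof. by rewrite trmx_mul map_mxM trmxCK. Qed.

Lemma construct {C : numClosedFieldType} dA dB (Lam : dA.-tuple C) (psi : 'M[C]_(dA, dB)) :
  unimodular_spectrum Lam -> (0 < dA)%N -> (\rank psi <= max_mult Lam)%N ->
  exists W, in_WLambda Lam W /\ exists2 l, W *m psi = l *: psi & `|l| = 1.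
Proof.
move=> hun dA0 hrk.
have Ln0 : (Lam : seq C) != [::] by rewrite -size_eq0 size_tuple -lt0n.
have [l lin hl] := max_attained (fun x => count_mem x Lam) Ln0.
set Phi := psi^T.
set r := count_mem l Lam in hl.
have hk : (\rank Phi <= r)%N by rewrite mxrank_tr -hl.
have uU := schmidt_complete_unitarymx Phi.
have eq := add_rank_ortho Phi.
set U := schmidt_complete Phi in uU.
have UtU : U ^t* *m U = 1%:M by have := mulmxKtV (1%:M) uU eq; rewrite mul1mx.
have UUt : U *m U ^t* = 1%:M by apply/unitarymxP.
pose S1 := schmidt (row_base Phi).
pose S2 := schmidt (row_base (orthomx Num.Def.conjC (hermitian1mx dA) Phi)).
have Ud : U = col_mx S1 S2 by [].
have Ut : U ^t* = row_mx (S1^t*) (S2^t*) by rewrite Ud tr_col_mx map_row_mx.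
have sS2 : (S2 <= orthomx Num.Def.conjC (hermitian1mx dA) Phi)%MS.
  by rewrite /S2 eqmx_schmidt_free ?row_base_free // eq_row_base.
have hPS2 : Phi *m S2^t* = 0.
  by move: sS2; rewrite orthomx1E => /eqP h; rewrite -(trC_mul S2 Phi) h trmx0 map_mx0.
pose k := \rank Phi.
pose k2 := \rank (orthomx Num.Def.conjC (hermitian1mx dA) Phi).
have eqk : (k + k2)%N = dA by [].
pose s := nseq r l ++ filter (predC (pred1 l)) Lam.
have hperm : perm_eq s Lam.
  have h := perm_filterC (pred1 l) Lam; rewrite filter_pred1_nseq in h.
  by rewrite /s /r h.
have hsz : size s = (k + k2)%N.
  by rewrite eqk /s size_cat size_nseq size_filter /r count_predC size_tuple.
pose d : 'rV[C]_(k + k2) := \row_i nth 0 s i.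
pose M := U ^t* *m diag_mx d *m U.
have charM : char_poly M = \prod_(x <- Lam) ('X - x%:P).
  rewrite /M (sim_char (esym eqk) _ UUt) char_diag.
  rewrite (eq_bigr (fun i : 'I_(k + k2) => 'X - (nth 0 s i)%:P)); last by move=> i _; rewrite mxE.
  rewrite -(big_mkord xpredT (fun i => 'X - (nth 0 s i)%:P)) -hsz -(big_nth 0 xpredT (fun x : C => 'X - x%:P)).
  exact: perm_big.
have hdm : forall i, (d 0 i) \in (Lam : seq C).
  move=> i; rewrite mxE -(perm_mem hperm) mem_nth // hsz; exact: ltn_ord.
have uD : diag_mx d \is unitarymx.
  apply/unitarymxP; rewrite mul_diag_mx; apply/matrixP => i j; rewrite !mxE.
  have [<-|ne] := eqVneq i j.
    rewrite mulr1n -normCK; have := hdm i; rewrite mxE => /(allP hun) /eqP ->.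
    by rewrite expr1n.
  by rewrite mulr0n rmorph0 mulr0.
have uUt : U ^t* \is unitarymx by apply/unitarymxP; rewrite trmxCK.
have uM : M \is unitarymx by rewrite /M; apply: mul_unitarymx => //; apply: mul_unitarymx.
have hY : Phi *m U ^t* *m diag_mx d = l *: (Phi *m U ^t*).
  rewrite Ut mul_mx_row hPS2 mul_mx_diag; apply/matrixP => b j; rewrite !mxE.
  case: splitP => j' hj; last by rewrite mxE mul0r mulr0.
  have jr : (j' < r)%N by apply: leq_trans (ltn_ord j') hk.
  by rewrite hj nth_cat size_nseq jr nth_nseq jr mulrC.
have PhiM : Phi *m M = l *: Phi.
  by rewrite /M !mulmxA hY -scalemxAl -mulmxA UtU mulmx1.
exists M^T; split.
  by split; [rewrite unitaryE trmx_unitary | rewrite char_poly_tr].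
exists l.
  apply: trmx_inj; rewrite trmx_mul trmxK linearZ /=; exact: PhiM.
by apply/eqP; have /allP := hun; apply.
Qed.


Lemma ipZl {C : numClosedFieldType} m n (X Y : 'M[C]_(m, n)) a :
  ip (a *: X) Y = a^* * ip X Y.
Proof.
rewrite /ip mulr_sumr; apply: eq_bigr => i _; rewrite mulr_sumr.
by apply: eq_bigr => j _; rewrite mxE rmorphM mulrA.
Qed.

Lemma normalize {C : numClosedFieldType} m n (P : 'M[C]_(m, n)) :
  P != 0 -> exists psi : 'M[C]_(m, n), ip psi psi = 1 /\ \rank psi = \rank P.
Proof.
move=> Pn0; set q := ip P P.
have qn0 : q != 0 by apply: contra Pn0 => /eqP /ip_eq0 ->.
set t := sqrtC q.
have tn0 : t != 0 by rewrite sqrtC_eq0.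
have t0 : 0 <= t by rewrite sqrtC_ge0 ip_ge0.
exists (t^-1 *: P); split; last by rewrite mxrank_scale_nz // invr_eq0.
rewrite ipZl ipZ geC0_conj ?invr_ge0 // mulrA -expr2 exprVn sqrtCK mulVf //.
Qed.

Lemma dA_pos {C : numClosedFieldType} m n (X : 'M[C]_(m, n)) : ip X X = 1 -> (0 < m)%N.
Proof.
case: m X => [|m] X //; rewrite /ip big_ord0 => /eqP; by rewrite eq_sym oner_eq0.
Qed.

Lemma part1 {C : numClosedFieldType} dA dB (Lam : dA.-tuple C) (psi : 'M[C]_(dA, dB)) F :
  unimodular_spectrum Lam -> unit_state psi -> is_F_Lambda Lam psi F ->
  (E_Lambda F = 0 <-> (schmidt_rank psi <= max_mult Lam)%N).
Proof.
move=> hun /unit_ip hX [[W0 hW0 hF0] hmax].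
have F1 : F <= 1.
  by rewrite -hF0 expectE; apply: boundW hX; rewrite -unitaryE; case: hW0.
rewrite schmidtE /E_Lambda; split.
  move=> /eqP; rewrite subr_eq0 => /eqP hF; apply: (forward_rank hW0 hX).
  by rewrite hF0.
move=> hrk; have [W [hW [l hWl hl]]] := construct hun (dA_pos hX) hrk.
have := hmax W hW; rewrite expectE hWl ipZ hX mulr1 hl expr1n => F1'.
by apply/eqP; rewrite subr_eq0 eq_le F1'.
Qed.

Local Close Scope sesquilinear_scope.
Unset Implicit Arguments.

Theorem theorem3 (C : numClosedFieldType) (dA dB : nat) (Lam : dA.-tuple C) :
  (dA <= dB)%N -> unimodular_spectrum Lam ->
  (forall (psi : 'M[C]_(dA, dB)) (F : C),
     unit_state psi -> is_F_Lambda Lam psi F ->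
     (E_Lambda F = 0 <-> (schmidt_rank psi <= max_mult Lam)%N))
  /\
  ((forall (psi : 'M[C]_(dA, dB)) (F : C),
      unit_state psi -> is_F_Lambda Lam psi F ->
      (E_Lambda F = 0 <-> schmidt_rank psi = 1%N))
   <-> uniq Lam).
Proof.
move=> hAB hun; split=> [psi F hu hF|]; first exact: part1.
split.
  move=> H; apply/negPn/negP => nu.
  have : has (fun x => (1 < count_mem x Lam)%N) Lam.
    apply/negPn/negP => /hasPn h; apply: (negP nu); apply: count_mem_uniq => x.
    case: (boolP (x \in (Lam : seq C))) => xin.
      have := h x xin; rewrite -leqNgt => le1; apply/eqP; rewrite eqn_leq le1 /=.
      by rewrite -has_pred1 has_count in xin.
    by apply/count_memPn.
  case/hasP => x xin hx.
  have h2A : (2 <= dA)%N by rewrite -(size_tuple Lam); apply: leq_trans hx (count_size _ _).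
  have hP : \rank (pid_mx 2 : 'M[C]_(dA, dB)) = 2%N.
    by rewrite rank_pid_mx // (leq_trans h2A hAB).
  have Pn0 : (pid_mx 2 : 'M[C]_(dA, dB)) != 0 by rewrite -mxrank_eq0 hP.
  have [psi [hX hr]] := normalize Pn0; rewrite hP in hr.
  have hst : unit_state psi by rewrite /unit_state -ipXX hX eqxx.
  have hrk : (\rank psi <= max_mult Lam)%N.
    by rewrite hr; apply: leq_trans hx (count_le_max _ _).
  have [W [hW [l hWl hl]]] := construct hun (dA_pos hX) hrk.
  have hF : is_F_Lambda Lam psi 1.
    split; first by exists W => //; rewrite expectE hWl ipZ hX mulr1 hl expr1n.
    by move=> W' [uW' _]; rewrite expectE; apply: boundW hX; rewrite -unitaryE.
  have := (H psi 1 hst hF).1; rewrite /E_Lambda subrr schmidtE hr => /(_ erefl) //.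
move=> hu psi F hst hF; apply: (iff_trans (part1 hun hst hF)).
have hX := unit_ip hst.
have r1 : (1 <= schmidt_rank psi)%N.
  rewrite schmidtE lt0n mxrank_eq0; apply/eqP => p0.
  move: hX; rewrite p0 /ip big1 => [/eqP|i _]; first by rewrite eq_sym oner_eq0.
  by rewrite big1 // => j _; rewrite mxE mulr0.
have m1 : (max_mult Lam <= 1)%N.
  by apply/bigmax_leqP_seq => i _ _; rewrite count_uniq_mem // leq_b1.
split=> [h|->]; first by apply/eqP; rewrite eqn_leq r1 (leq_trans h m1).
have sz : (0 < size Lam)%N by rewrite size_tuple; exact: dA_pos hX.
have ain := mem_nth 0 sz.
apply: leq_trans (count_le_max Lam (nth 0 Lam 0)).
by rewrite -has_count has_pred1.
Qed.
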